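(* Let $(\Phi,D)$ be a domain-free continuous information algebra. Then $(\Phi,D)$ is s-continuous if and only if for every directed subset $X\subseteq\Phi$ and every $x\in D$, $(\vee X)^{\Rightarrow x}=\bigvee_{\phi\in X}\phi^{\Rightarrow x}$.
   Context: A domain-free information algebra $(\Phi,D)$ consists of a set $\Phi$, a lattice $D$, a combination $\otimes$ and a focusing $(\psi,x)\mapsto\psi^{\Rightarrow x}$ ($x\in D$) such that: $\otimes$ is associative, commutative with neutral element $e$; $(\psi^{\Rightarrow y})^{\Rightarrow x}=\psi^{\Rightarrow x\wedge y}$; $(\phi^{\Rightarrow x}\otimes\psi)^{\Rightarrow x}=\phi^{\Rightarrow x}\otimes\psi^{\Rightarrow x}$; every $\psi$ has some $x$ with $\psi^{\Rightarrow x}=\psi$; $\psi\otimes\psi^{\Rightarrow x}=\psi$. Order: $\psi\le\phi$ iff $\psi\otimes\phi=\phi$; suprema refer to this order. $a\ll b$ means: for every directed $X$ with $b\le\vee X$ there is $c\in X$ with $a\le c$. $(\Phi,D)$, with $D$ having a top element, is continuous (resp. s-continuous) if there exists $\Gamma\subseteq\Phi$, closed under combination and containing $e$, such that every directed subset of $\Gamma$ has a supremum in $\Phi$ and $\phi=\vee\{\psi\in\Gamma:\psi\ll\phi\}$ for all $\phi\in\Phi$ (resp. $\phi^{\Rightarrow x}=\vee\{\psi\in\Gamma:\psi=\psi^{\Rightarrow x}\ll\phi\}$ for all $\phi\in\Phi$, $x\in D$). *)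

(* Defs.v *)
From mathcomp Require Import all_boot all_order.
Set Implicit Arguments. Unset Strict Implicit. Unset Printing Implicit Defensive.
Import Order.TTheory.
Local Open Scope order_scope.

Section DFIA.
Variables (disp : Order.disp_t) (D : tLatticeType disp) (Phi : Type).
Variables (comb : Phi -> Phi -> Phi) (e : Phi) (foc : Phi -> D -> Phi).

Definition dfia : Prop :=
  (forall a b c, comb a (comb b c) = comb (comb a b) c) /\
  (forall a b, comb a b = comb b a) /\
  (forall a, comb e a = a) /\
  (forall psi x y, foc (foc psi y) x = foc psi (Order.meet x y)) /\
  (forall phi psi x, foc (comb (foc phi x) psi) x = comb (foc phi x) (foc psi x)) /\
  (forall psi, exists x, foc psi x = psi) /\
  (forall psi x, comb psi (foc psi x) = psi).

Definition ile (psi phi : Phi) : Prop := comb psi phi = phi.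

Definition is_sup (X : Phi -> Prop) (s : Phi) : Prop :=
  (forall a, X a -> ile a s) /\ (forall u, (forall a, X a -> ile a u) -> ile s u).

Definition directed (X : Phi -> Prop) : Prop :=
  (exists a, X a) /\
  (forall a b, X a -> X b -> exists c, [/\ X c, ile a c & ile b c]).

Definition way_below (a b : Phi) : Prop :=
  forall X s, directed X -> is_sup X s -> ile b s -> exists c, X c /\ ile a c.

Definition basis_like (Gamma : Phi -> Prop) : Prop :=
  [/\ (forall a b, Gamma a -> Gamma b -> Gamma (comb a b)),
      Gamma e
    & (forall X, directed X -> (forall a, X a -> Gamma a) -> exists s, is_sup X s)].

Definition continuous : Prop :=
  exists Gamma : Phi -> Prop, basis_like Gamma /\
    (forall phi, is_sup (fun psi => Gamma psi /\ way_below psi phi) phi).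

Definition s_continuous : Prop :=
  exists Gamma : Phi -> Prop, basis_like Gamma /\
    (forall phi x, is_sup (fun psi => [/\ Gamma psi, psi = foc psi x & way_below psi phi])
                          (foc phi x)).

Definition focus_preserves_directed_sups : Prop :=
  forall (X : Phi -> Prop) (s : Phi) (x : D), directed X -> is_sup X s ->
    is_sup (fun y => exists phi, X phi /\ y = foc phi x) (foc s x).

End DFIA.

(* Main.v *)
Require Import Defs.
From mathcomp Require Import all_boot all_order.
Import Order.TTheory.
Set Implicit Arguments.

Section Aux.
Variables (disp : Order.disp_t) (D : tLatticeType disp) (Phi : Type).
Variables (comb : Phi -> Phi -> Phi) (e : Phi) (foc : Phi -> D -> Phi).
Hypotheses (cA : forall a b c, comb a (comb b c) = comb (comb a b) c)
  (cC : forall a b, comb a b = comb b a) (cE : forall a, comb e a = a)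
  (fT : forall psi x y, foc (foc psi y) x = foc psi (Order.meet x y))
  (fC : forall phi psi x, foc (comb (foc phi x) psi) x = comb (foc phi x) (foc psi x))
  (fS : forall psi, exists x, foc psi x = psi)
  (fI : forall psi x, comb psi (foc psi x) = psi).

Lemma le_refl a : ile comb a a.
Proof. destruct (fS a) as [x Hx]. have := fI a x. rewrite Hx. done. Qed.

Lemma le_trans a b c : ile comb a b -> ile comb b c -> ile comb a c.
Proof. rewrite /ile => H1 H2. by rewrite -{1}H2 cA H1 H2. Qed.

Lemma le_antisym a b : ile comb a b -> ile comb b a -> a = b.
Proof. rewrite /ile => H1 H2. by rewrite -H2 cC H1. Qed.

Lemma le_comb_l a b : ile comb a (comb a b).
Proof. rewrite /ile cA. by rewrite (le_refl a). Qed.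

Lemma le_comb_r a b : ile comb b (comb a b).
Proof. rewrite /ile (cC a b) cA. by rewrite (le_refl b). Qed.

Lemma comb_lub a b u : ile comb a u -> ile comb b u -> ile comb (comb a b) u.
Proof. rewrite /ile => H1 H2. by rewrite -cA H2 H1. Qed.

Lemma foc_le a x : ile comb (foc a x) a.
Proof. by rewrite /ile cC fI. Qed.

Lemma foc_mono a b x : ile comb a b -> ile comb (foc a x) (foc b x).
Proof.
move=> H. have h : comb (foc a x) b = b := le_trans (foc_le a x) H.
have := fC a b x. rewrite h => E. exact: (esym E).
Qed.

Lemma foc_idem a x : foc (foc a x) x = foc a x.
Proof. by rewrite fT meetxx. Qed.

Lemma wb_le a b : way_below comb a b -> ile comb a b.
Proof.
move=> Hw.
have Hd : directed comb (fun c => c = b).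
  split; first by exists b. move=> a' b' -> ->. exists b; split => //; apply le_refl.
have Hs : is_sup comb (fun c => c = b) b.
  split; first by move=> a' ->; apply le_refl. move=> u Hu; exact: Hu.
have [c [-> Hc]] := Hw _ _ Hd Hs (le_refl b). done.
Qed.

Lemma wb_mono_l a b c : ile comb a b -> way_below comb b c -> way_below comb a c.
Proof.
move=> Hab Hw X s Hd Hs Hc. have [d [Xd Hbd]] := Hw X s Hd Hs Hc.
exists d; split => //; exact: le_trans Hab Hbd.
Qed.

Lemma wb_mono_r a b c : way_below comb a b -> ile comb b c -> way_below comb a c.
Proof.
move=> Hw Hbc X s Hd Hs Hc. apply: (Hw X s Hd Hs). exact: le_trans Hbc Hc.
Qed.

Lemma wb_comb a b p : way_below comb a p -> way_below comb b p -> way_below comb (comb a b) p.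
Proof.
move=> Ha Hb X s Hd Hs Hp.
have [c1 [X1 H1]] := Ha X s Hd Hs Hp. have [c2 [X2 H2]] := Hb X s Hd Hs Hp.
have [c3 [X3 H13 H23]] := Hd.2 c1 c2 X1 X2.
exists c3; split => //. apply comb_lub; [exact: le_trans H1 H13 | exact: le_trans H2 H23].
Qed.

Lemma e_wb p : way_below comb e p.
Proof. move=> X s Hd Hs Hp. have [c Xc] := Hd.1. exists c; split => //; exact: cE. Qed.

Lemma Y_directed (G : Phi -> Prop) phi :
  (forall a b, G a -> G b -> G (comb a b)) -> G e ->
  directed comb (fun psi => G psi /\ way_below comb psi phi).
Proof.
move=> Gc Ge. split; first by exists e; split => //; apply e_wb.
move=> a b [Ga Wa] [Gb Wb]. exists (comb a b); split.
- split; [exact: Gc | exact: wb_comb].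
- apply le_comb_l.
- apply le_comb_r.
Qed.

Lemma dcpo (G : Phi -> Prop) : basis_like comb e G ->
  (forall phi, is_sup comb (fun psi => G psi /\ way_below comb psi phi) phi) ->
  forall X, directed comb X -> exists s, is_sup comb X s.
Proof.
move=> [Gc Ge Gd] Hc X HX.
pose U := fun a => G a /\ exists phi, X phi /\ way_below comb a phi.
have HU : directed comb U.
  split.
    have [p Xp] := HX.1. exists e; split => //. exists p; split => //; apply e_wb.
  move=> a b [Ga [p1 [X1 W1]]] [Gb [p2 [X2 W2]]].
  have [p3 [X3 H13 H23]] := HX.2 p1 p2 X1 X2.
  exists (comb a b); split.
  - split; first exact: Gc. exists p3; split => //.
    apply wb_comb; [exact: wb_mono_r W1 H13 | exact: wb_mono_r W2 H23].
  - apply le_comb_l.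
  - apply le_comb_r.
have [s Hs] := Gd U HU (fun a Ua => Ua.1).
exists s; split.
- move=> phi Xphi. apply (Hc phi).2 => a [Ga Wa]. apply Hs.1. split => //. by exists phi.
- move=> u Hu. apply Hs.2 => a [Ga [p [Xp Wp]]].
  apply: le_trans (wb_le Wp) (Hu p Xp).
Qed.

End Aux.

Theorem theorem3p11 (disp : Order.disp_t) (D : tLatticeType disp) (Phi : Type)
  (comb : Phi -> Phi -> Phi) (e : Phi) (foc : Phi -> D -> Phi)
  (Halg : dfia comb e foc) (Hcont : continuous comb e) :
  s_continuous comb e foc <-> focus_preserves_directed_sups comb foc.
Proof.
have [cA [cC [cE [fT [fC [fS fI]]]]]] := Halg.
have LR := le_refl D comb foc fS fI.
have FM := foc_mono D foc cA cC fC fI.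
split.
- move=> [G [HG Hsc]] X s x Hd Hs. split.
  + move=> y [phi [Xphi ->]]. apply: FM. exact: Hs.1.
  + move=> u Hu. apply (Hsc s x).2 => psi [Gpsi Epsi Wpsi].
    have [c [Xc Hpc]] := Wpsi X s Hd Hs (LR s).
    rewrite Epsi. apply: (le_trans cA (b := foc c x)).
    * exact: FM.
    * apply Hu. by exists c.
- move=> Hfp. have [G [HG Hc]] := Hcont.
  have [Gc Ge Gd] := HG.
  exists (fun _ => True). split.
    split => // X HX _. exact: (dcpo D foc cA cC cE fS fI HG Hc HX).
  move=> phi x.
  have HY := Y_directed D comb e foc cA cC cE fS fI G phi Gc Ge.
  have H := Hfp _ phi x HY (Hc phi).
  split.
  + move=> psi [_ Epsi Wpsi]. rewrite Epsi. apply: FM.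
    exact: (wb_le D foc fS fI).
  + move=> u Hu. apply H.2 => y [p [[Gp Wp] ->]]. apply Hu. split => //.
    * by rewrite (foc_idem D foc fT).
    * apply: (wb_mono_l cA) Wp. exact: (foc_le D comb foc cC fI).
Qed.
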